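(* For $n\ge 1$ let $\tau$ be a plane increasing binary tree of size $n$ chosen uniformly at random, and let $X_n$ be the number of distinct shapes (unlabeled plane binary trees) among the fringe subtrees of $\tau$, i.e. the size of the compacted tree of $\tau$. Then \[ \mathbb{E}(X_n) = \mathcal{O}\!\left(\frac{n}{\log n}\right) \quad \text{as } n\to\infty . \]
   Context: A plane binary tree is a rooted tree in which every node has a left and a right slot, each of which is either empty or holds a subtree (left and right are distinguished); its size is its number of nodes. A plane increasing binary tree of size $n$ is a plane binary tree with $n$ nodes labeled by the distinct integers $1,\dots,n$ such that labels increase along every path from the root; there are $n!$ of them (this is the random binary search tree model). The shape of such a tree is the unlabeled plane binary tree obtained by forgetting the labels. A fringe subtree is a node together with all its descendants. The compacted tree keeps one copy of each distinct fringe-subtree shape. *)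

(* Defs.v *)
From Stdlib Require Import Reals.
From HB Require Import structures.
From mathcomp Require Import all_boot.

Set Implicit Arguments. Unset Strict Implicit. Unset Printing Implicit Defensive.

Inductive bt : Type := bt_empty | bt_node of bt & bt.

Definition bt_eq_dec : forall s t : bt, {s = t} + {s <> t}.
Proof. decide equality. Defined.
Definition bt_eqb (s t : bt) : bool := if bt_eq_dec s t then true else false.
Lemma bt_eqP : Equality.axiom bt_eqb.
Proof. by move=> s t; rewrite /bt_eqb; case: bt_eq_dec => h; constructor. Qed.
HB.instance Definition _ := hasDecEq.Build bt bt_eqP.

Inductive lbt : Type := lbt_empty | lbt_node of lbt & nat & lbt.

Definition lbt_eq_dec : forall s t : lbt, {s = t} + {s <> t}.
Proof. decide equality; exact: PeanoNat.Nat.eq_dec. Defined.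
Definition lbt_eqb (s t : lbt) : bool := if lbt_eq_dec s t then true else false.
Lemma lbt_eqP : Equality.axiom lbt_eqb.
Proof. by move=> s t; rewrite /lbt_eqb; case: lbt_eq_dec => h; constructor. Qed.
HB.instance Definition _ := hasDecEq.Build lbt lbt_eqP.

Fixpoint shape (t : lbt) : bt :=
  match t with
  | lbt_empty => bt_empty
  | lbt_node l _ r => bt_node (shape l) (shape r)
  end.

Fixpoint labels (t : lbt) : seq nat :=
  match t with
  | lbt_empty => [::]
  | lbt_node l a r => labels l ++ a :: labels r
  end.

(* The label of a node is smaller than the labels of its children
   (hence labels increase along every path from the root). *)
Definition root_gt (a : nat) (t : lbt) : bool :=
  match t with lbt_empty => true | lbt_node _ b _ => a < b end.

Fixpoint increasing (t : lbt) : bool :=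
  match t with
  | lbt_empty => true
  | lbt_node l a r => [&& root_gt a l, root_gt a r, increasing l & increasing r]
  end.

Definition incr_tree (n : nat) (t : lbt) : bool :=
  perm_eq (labels t) (iota 1 n) && increasing t.

Fixpoint fringe (t : lbt) : seq lbt :=
  match t with
  | lbt_empty => [::]
  | lbt_node l _ r => t :: (fringe l ++ fringe r)
  end.

Definition compacted_size (t : lbt) : nat :=
  size (undup (map shape (fringe t))).

Definition uniform_mean (s : seq lbt) (X : lbt -> nat) : R :=
  Rdiv (INR (\sum_(t <- s) X t)) (INR (size s)).

(* Main.v *)
Require Import Defs.
From Stdlib Require Import Reals.
From mathcomp Require Import all_boot.
From Stdlib Require Import Lra.
From mathcomp Require Import zify.

Fixpoint bsize (t : bt) : nat :=
  match t with bt_empty => 0 | bt_node l r => (bsize l + bsize r).+1 end.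
Fixpoint enc (t : bt) : seq bool :=
  match t with bt_empty => [:: false] | bt_node l r => true :: enc l ++ enc r end.

Lemma enc_prefix t t' x y : enc t ++ x = enc t' ++ y -> t = t' /\ x = y.
Proof.
elim: t t' x y => [|l IHl r IHr] [|l' r'] x y //=.
- by case.
- case; rewrite -!catA => /IHl [-> /IHr [-> ->]]; by [].
Qed.

Lemma enc_inj : injective enc.
Proof. by move=> t t' h; case: (enc_prefix t t' [::] [::]); rewrite ?cats0. Qed.

Lemma size_enc t : size (enc t) = (bsize t).*2.+1.
Proof. elim: t => [|l IHl r IHr] //=; rewrite size_cat IHl IHr; lia. Qed.

Fixpoint num (b : seq bool) : nat :=
  match b with [::] => 1 | x :: b' => x + (num b').*2 end.

Lemma num_pos b : 0 < num b.
Proof. elim: b => [|x b IH] //=; lia. Qed.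

Lemma num_inj : injective num.
Proof.
elim=> [|x b IH] [|x' b'] /=.
- by [].
- have := num_pos b'; case: x' => /=; lia.
- have := num_pos b; case: x => /=; lia.
- move=> h; have hx : x = x' by move: h; case: x; case: x' => /=; lia.
  subst x'; congr (_ :: _); apply: IH; move: h; case: x => /=; lia.
Qed.

Lemma num_lt b : num b < 2 ^ (size b).+1.
Proof. elim: b => [|x b IH] //=; rewrite expnS; case: x => /=; lia. Qed.

Lemma uniq_bound (V : seq nat) K : uniq V -> (forall x, x \in V -> x < K) -> size V <= K.
Proof.
move=> u h; rewrite -(size_iota 0 K); apply: uniq_leq_size => // x /h.
by rewrite mem_iota.
Qed.

Definition G m t := count (fun u => m <= bsize (Defs.shape u)) (fringe t).

Lemma compacted_le m t : compacted_size t <= 2 ^ (m.*2) + G m t.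
Proof.
rewrite /compacted_size.
set S := undup _.
rewrite -(count_predC (fun u => bsize u < m)) leq_add //.
- rewrite -size_filter.
  have -> : size [seq x <- S | bsize x < m] = size (map (fun u => num (enc u)) [seq x <- S | bsize x < m]) by rewrite size_map.
  apply: uniq_bound.
  + rewrite map_inj_uniq; first by rewrite filter_uniq // undup_uniq.
    by move=> a b /num_inj /enc_inj.
  + move=> x /mapP [u]; rewrite mem_filter => /andP [hu _] ->.
    apply: leq_trans (num_lt _) _; rewrite size_enc leq_exp2l //; lia.
- apply: leq_trans (count_undup _ _) _.
  rewrite count_map /G; apply: sub_count => u /=; rewrite -leqNgt; by [].
Qed.


Definition E r i (w : seq nat) j :=
  all (fun k => (k == j) || (nth 0 w (i + j) < nth 0 w (i + k))) (iota 0 r.+1).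
Definition P r w i := (i + r < size w) && E r i w 0.
Definition L r w := count (P r w) (iota 0 (size w)).

Lemma L_cat_eq r x y : L r (x ++ y) = count (P r (x ++ y)) (iota 0 (size x)) + L r y.
Proof.
rewrite /L size_cat iotaD count_cat add0n; congr (_ + _).
rewrite -[size x]addn0 iotaDl count_map; apply: eq_count => i /=.
rewrite /P /E size_cat; congr (_ && _); first by lia.
apply: eq_all => k.
rewrite !nth_cat -!addnA !ltnNge !leq_addr /= !addKn; by [].
Qed.

Lemma L_cat r x y : L r x + L r y <= L r (x ++ y).
Proof.
rewrite L_cat_eq leq_add2r; apply: sub_count => i /andP [h1 /allP h2].
apply/andP; split; first by rewrite size_cat; lia.
apply/allP => k hk; have := h2 k hk; move: hk; rewrite mem_iota => hk.
rewrite !nth_cat; have -> : i + 0 < size x by lia.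
have -> : i + k < size x by lia. by [].
Qed.

Lemma L_cons r a y : all (fun z => a < z) y -> (r <= size y) + L r y <= L r (a :: y).
Proof.
move=> /allP ha; rewrite -cat1s L_cat_eq /= leq_add2r ?addn0.
case: (leqP r (size y)) => //= hr; rewrite /P /E /= lt0b; apply/andP; split; first by lia.
apply/allP => k; rewrite mem_iota => hk; case: k hk => //= k hk.
apply: ha; apply: mem_nth; apply: leq_trans hr; lia.
Qed.

Lemma bsize_shape (t : lbt) : bsize (Defs.shape t) = size (labels t).
Proof. elim: t => [|l IHl a r IHr] //=; rewrite size_cat /= IHl IHr; lia. Qed.

Lemma incr_all (tr : lbt) a : Defs.increasing tr -> root_gt a tr -> all (fun x => a < x) (labels tr).
Proof.
elim: tr a => [|l IHl b r IHr] a //= /and4P [hl hr il ir] hab.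
rewrite all_cat /= hab /=; apply/andP; split.
- by apply/allP => x /(allP (IHl b il hl)); lia.
- by apply/allP => x /(allP (IHr b ir hr)); lia.
Qed.

Lemma G_le r (tr : lbt) : Defs.increasing tr -> G (r.*2.+1) tr <= L r (labels tr) + L r (rev (labels tr)).
Proof.
elim: tr => [|l IHl a rr IHr] //= /and4P [hl hr il ir].
rewrite /G /= count_cat -/(G _ l) -/(G _ rr) !bsize_shape /=.
have al := incr_all _ _ il hl; have ar := incr_all _ _ ir hr.
have h1 := L_cons r a _ ar; have h2 : (r <= size (rev (labels l))) + L r (rev (labels l)) <= L r (a :: rev (labels l)) by apply: L_cons; rewrite all_rev.
have h3 := L_cat r (labels l) (a :: labels rr).
have h4 := L_cat r (rev (labels rr)) (a :: rev (labels l)).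
rewrite rev_cat rev_cons -cats1 -catA cat1s.
have := IHl il; have := IHr ir.
rewrite size_rev in h2.
have hb : (r.*2.+1 <= size (labels l) + (size (labels rr)).+1) <= (r <= size (labels l)) + (r <= size (labels rr)).
  by case: (leqP r (size (labels l))); case: (leqP r (size (labels rr))); case: leqP => //=; lia.
lia.
Qed.


Lemma root_gt_all a (tr : lbt) : all (fun x => a < x) (labels tr) -> root_gt a tr.
Proof. case: tr => //= l b r; rewrite all_cat /= => /and3P [_ ->]. by []. Qed.

Lemma cat_cons_inj (a : nat) x y x' y' : a \notin x -> a \notin x' ->
  x ++ a :: y = x' ++ a :: y' -> x = x' /\ y = y'.
Proof.
elim: x x' => [|b x IH] [|b' x'] //=.
- by move=> _ _ [].
- by move=> _; rewrite inE => /norP [/eqP h _] [e]; case: h.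
- by rewrite inE => /norP [/eqP h _] _ [e]; case: h.
- rewrite !inE => /norP [_ hx] /norP [_ hx'] [-> /(IH _ hx hx') [-> ->]]; by [].
Qed.

Lemma labels_inj (t1 t2 : lbt) : Defs.increasing t1 -> Defs.increasing t2 ->
  uniq (labels t1) -> labels t1 = labels t2 -> t1 = t2.
Proof.
elim: t1 t2 => [|l IHl a r IHr] [|l' a' r'] //=.
- by move=> _ _ _ /(f_equal size); rewrite size_cat /= addnS.
- by move=> _ _ _ /(f_equal size); rewrite size_cat /= addnS.
move=> /and4P [hl hr il ir] /and4P [hl' hr' il' ir'] u e.
have al := incr_all _ _ il hl; have ar := incr_all _ _ ir hr.
have al' := incr_all _ _ il' hl'; have ar' := incr_all _ _ ir' hr'.
have ha : a = a'.
  have m1 : a' \in labels l ++ a :: labels r by rewrite e mem_cat inE eqxx orbT.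
  have m2 : a \in labels l' ++ a' :: labels r' by rewrite -e mem_cat inE eqxx orbT.
  move: m1 m2; rewrite !mem_cat !inE.
  case/orP => [/(allP al)|/orP [/eqP -> //|/(allP ar)]] h1;
  case/orP => [/(allP al')|/orP [/eqP -> //|/(allP ar')]] h2;
  by have := ltn_trans h1 h2; rewrite ltnn.
subst a'.
have na : a \notin labels l by apply/negP => /(allP al); rewrite ltnn.
have na' : a \notin labels l' by apply/negP => /(allP al'); rewrite ltnn.
case: (cat_cons_inj _ _ _ _ _ na na' e) => e1 e2.
move: u; rewrite cat_uniq /= => /and4P [ul _ _ ur].
by rewrite (IHl l' il il' ul e1) (IHr r' ir ir' ur e2).
Qed.

Fixpoint cart (k : nat) (w : seq nat) : lbt :=
  match k with
  | 0 => lbt_empty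
  | k'.+1 =>
    if w is x :: w' then
      let a := foldr minn x w' in
      let i := index a w in
      lbt_node (cart k' (take i w)) a (cart k' (drop i.+1 w))
    else lbt_empty
  end.

Lemma foldr_minn_mem x s : foldr minn x s \in x :: s.
Proof.
elim: s => [|b s IH]; first by rewrite inE.
have -> : foldr minn x (b :: s) = minn b (foldr minn x s) by [].
case: (leqP b (foldr minn x s)) => h.
- by rewrite !inE eqxx orbT.
- move: IH; rewrite !inE => /orP [->|->] //; by rewrite !orbT.
Qed.

Lemma foldr_minn_le x s y : y \in x :: s -> foldr minn x s <= y.
Proof.
elim: s => [|b s IH]; first by rewrite inE => /eqP ->.
have -> : foldr minn x (b :: s) = minn b (foldr minn x s) by [].
rewrite !inE => /or3P [/eqP e|/eqP ->|h].
- apply: leq_trans (geq_minr _ _) _; apply: IH; by rewrite e inE eqxx.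
- exact: geq_minl.
- apply: leq_trans (geq_minr _ _) _; apply: IH; by rewrite inE h orbT.
Qed.

Lemma cart_ok k w : size w <= k -> uniq w ->
  labels (cart k w) = w /\ Defs.increasing (cart k w).
Proof.
elim: k w => [|k IH] [|x w'] // hs u.
have -> : cart k.+1 (x :: w') = lbt_node (cart k (take (index (foldr minn x w') (x::w')) (x::w'))) (foldr minn x w') (cart k (drop (index (foldr minn x w') (x::w')).+1 (x::w'))) by [].
set a := foldr minn x w'.
have am : a \in x :: w' by apply: foldr_minn_mem.
have ale : forall y, y \in x :: w' -> a <= y by move=> y; apply: foldr_minn_le.
set i := index a (x :: w').
have hi : i < size (x :: w') by rewrite index_mem.
have ew : x :: w' = take i (x :: w') ++ a :: drop i.+1 (x :: w').
  by rewrite -{1}(cat_take_drop i (x :: w')) (drop_nth 0 hi) nth_index.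
clearbody i.
move: (u); rewrite {1}ew cat_uniq /= => /and3P [u1 hna /andP [hna2 u2]].
have na : a \notin take i (x :: w').
  by move: hna; rewrite negb_or => /andP [].
have s1 : size (take i (x :: w')) <= k.
  rewrite size_take; apply: leq_trans (geq_minl _ _) _; rewrite -ltnS; exact: leq_trans hi hs.
have s2 : size (drop i.+1 (x :: w')) <= k.
  rewrite size_drop; move: hs; move: (size (x :: w')) => n0 hn0; lia.
have [l1 i1] := IH _ s1 u1.
have [l2 i2] := IH _ s2 u2.
split; first by rewrite l1 l2 -ew.
apply/and4P; split => //; apply: root_gt_all.
- rewrite l1; apply/allP => y hy.
  have hy' : y \in x :: w' by rewrite ew mem_cat hy.
  have := ale _ hy'; rewrite leq_eqVlt => /orP [/eqP e|] //.
  by move: na; rewrite e hy.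
- rewrite l2; apply/allP => y hy.
  have hy' : y \in x :: w' by rewrite ew mem_cat inE hy !orbT.
  have := ale _ hy'; rewrite leq_eqVlt => /orP [/eqP e|] //.
  by move: hna2; rewrite e hy.
Qed.


Definition tsw (i j k : nat) := if k == i then j else if k == j then i else k.
Definition swap i j (w : seq nat) := mkseq (fun k => nth 0 w (tsw i j k)) (size w).

Lemma tswK i j : involutive (tsw i j).
Proof.
move=> k; rewrite /tsw.
case: (eqVneq k i) => [->|hki]; first by rewrite eqxx; case: (eqVneq j i) => [->|hji] //; rewrite eqxx.
case: (eqVneq k j) => [->|hkj]; first by rewrite eqxx.
by rewrite (negbTE hki) (negbTE hkj).
Qed.

Lemma tsw_lt i j k n : i < n -> j < n -> k < n -> tsw i j k < n.
Proof. by rewrite /tsw; case: ifP => _ //; case: ifP. Qed.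

Lemma size_swap i j w : size (swap i j w) = size w.
Proof. by rewrite size_mkseq. Qed.

Lemma nth_swap i j w k : k < size w -> nth 0 (swap i j w) k = nth 0 w (tsw i j k).
Proof. by move=> h; rewrite nth_mkseq. Qed.

Lemma swapK i j w : i < size w -> j < size w -> swap i j (swap i j w) = w.
Proof.
move=> hi hj; apply: (@eq_from_nth _ 0); rewrite !size_swap // => k hk.
rewrite nth_swap ?size_swap // nth_swap ?tswK //.
by apply: tsw_lt.
Qed.

Lemma perm_swap i j w : i < size w -> j < size w -> perm_eq (swap i j w) w.
Proof.
move=> hi hj.
rewrite -[X in perm_eq _ X](mkseq_nth 0 w) /swap /mkseq.
have -> : [seq nth 0 w (tsw i j k) | k <- iota 0 (size w)] = map (nth 0 w) (map (tsw i j) (iota 0 (size w))) by rewrite -map_comp.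
apply: perm_map; apply: uniq_perm.
- by rewrite map_inj_uniq ?iota_uniq //; apply: (can_inj (tswK i j)).
- exact: iota_uniq.
- move=> k; apply/mapP/idP.
  + by case=> k' hk' ->; move: hk'; rewrite !mem_iota !add0n => /andP [_ h]; apply: tsw_lt.
  + move=> hk; exists (tsw i j k); last by rewrite tswK.
    by move: hk; rewrite !mem_iota !add0n => /andP [_ h]; apply: tsw_lt.
Qed.

Lemma tsw_val i j k : tsw i (i + j) (i + k) = if k == 0 then i + j else if k == j then i else i + k.
Proof.
rewrite /tsw eqn_add2l.
have -> : (i + k == i) = (k == 0) by rewrite -{2}[i]addn0 eqn_add2l.
by [].
Qed.

Lemma E_swap r i w j : i + r < size w -> j <= r -> E r i w j = E r i (swap i (i + j) w) 0.
Proof.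
move=> hs hj; rewrite /E.
have hn : forall k, k \in iota 0 r.+1 -> nth 0 (swap i (i + j) w) (i + k) =
   nth 0 w (if k == 0 then i + j else if k == j then i else i + k).
  move=> k; rewrite mem_iota add0n => hk; rewrite nth_swap ?tsw_val //; lia.
have h0 : nth 0 (swap i (i + j) w) (i + 0) = nth 0 w (i + j).
  by rewrite hn // mem_iota.
rewrite h0; apply/allP/allP => H k hk.
- rewrite (hn k hk); case: (eqVneq k 0) => //= hk0.
  case: (eqVneq k j) => [ekj|hkj].
  + have := H 0; rewrite mem_iota => /(_ isT).
    by rewrite addn0 -ekj eq_sym (negbTE hk0).
  + by have := H k hk; rewrite (negbTE hkj).
- case: (eqVneq k j) => //= hkj.
  case: (eqVneq k 0) => [ek0|hk0].
  + subst k.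
    have hjm : j \in iota 0 r.+1 by rewrite mem_iota; lia.
    have := H j hjm; rewrite (hn j hjm) eqxx.
    by rewrite eq_sym (negbTE hkj) addn0.
  + by have := H k hk; rewrite (hn k hk) (negbTE hk0) (negbTE hkj).
Qed.

Lemma sum_invol (Q : seq (seq nat)) (f : seq nat -> seq nat) (F : seq nat -> nat) :
  uniq Q -> (forall w, w \in Q -> f w \in Q) -> (forall w, w \in Q -> f (f w) = w) ->
  \sum_(w <- Q) F (f w) = \sum_(w <- Q) F w.
Proof.
move=> uQ cl inv; rewrite -(big_map f xpredT F); apply: perm_big; apply: uniq_perm => //.
- rewrite map_inj_in_uniq // => x y hx hy e.
  by rewrite -(inv x hx) -(inv y hy) e.
- move=> w; apply/mapP/idP => [[w' hw' ->]|hw]; first exact: cl.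
  by exists (f w); [apply: cl | rewrite inv].
Qed.

Lemma count_sum (T : Type) (p : pred T) s : count p s = \sum_(x <- s) p x.
Proof. elim: s => [|x s IH]; by rewrite ?big_nil ?big_cons //= IH. Qed.

Lemma sumE_le1 r i w : \sum_(j <- iota 0 r.+1) E r i w j <= 1.
Proof.
rewrite -count_sum.
case: (boolP (has (E r i w) (iota 0 r.+1))) => [/hasP [j0 hj0 e0]|]; last first.
  by rewrite has_count lt0n negbK => /eqP ->.
rewrite -size_filter.
have -> : 1 = size [:: j0] by [].
apply: uniq_leq_size; first by rewrite filter_uniq // iota_uniq.
move=> j; rewrite mem_filter inE => /andP [ej hj].
apply/negPn/negP => hne.
move: (allP ej j0 hj0) (allP e0 j hj).
rewrite eq_sym (negbTE hne) /= => h1 h2.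
by have := ltn_trans h1 h2; rewrite ltnn.
Qed.


Lemma sum_const_iota m c : \sum_(j <- iota 0 m) c = m * c.
Proof. by rewrite big_const_seq count_predT size_iota iter_addn_0 mulnC. Qed.


Lemma sum_P (Q : seq (seq nat)) (n r : nat) (uQ : uniq Q)
  (szQ : forall w, w \in Q -> size w = n)
  (swQ : forall w a b, w \in Q -> a < n -> b < n -> swap a b w \in Q) i : r.+1 * \sum_(w <- Q) P r w i <= size Q.
Proof.
case: (ltnP (i + r) n) => hir; last first.
  rewrite big_seq big1 ?muln0 // => w hw; rewrite /P szQ //.
  by rewrite ltnNge hir.
have e1 : \sum_(w <- Q) P r w i = \sum_(w <- Q) E r i w 0.
  by apply: eq_big_seq => w hw; rewrite /P szQ // hir.
have e2 : forall j, j \in iota 0 r.+1 -> \sum_(w <- Q) E r i w j = \sum_(w <- Q) E r i w 0.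
  move=> j; rewrite mem_iota add0n => hj.
  rewrite (eq_big_seq (fun w => nat_of_bool (E r i (swap i (i + j) w) 0))); last first.
    by move=> w hw; congr nat_of_bool; apply: E_swap; rewrite ?szQ //; lia.
  apply: (sum_invol Q (swap i (i + j)) (fun w => nat_of_bool (E r i w 0))) => //.
  - by move=> w hw; apply: swQ => //; lia.
  - by move=> w hw; apply: swapK; rewrite szQ //; lia.
rewrite e1 -sum_const_iota -(eq_big_seq _ e2) exchange_big /=.
rewrite -sum1_size; apply: leq_sum => w _; exact: sumE_le1.
Qed.

Lemma sum_L (Q : seq (seq nat)) (n r : nat) (uQ : uniq Q)
  (szQ : forall w, w \in Q -> size w = n)
  (swQ : forall w a b, w \in Q -> a < n -> b < n -> swap a b w \in Q) : r.+1 * \sum_(w <- Q) L r w <= n * size Q.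
Proof.
rewrite (eq_big_seq (fun w => \sum_(i <- iota 0 n) P r w i)); last first.
  by move=> w hw; rewrite /L szQ // count_sum.
rewrite exchange_big big_distrr /= -sum_const_iota.
apply: leq_sum => i _; exact: (sum_P Q n r uQ szQ swQ).
Qed.


Lemma main_nat n r (s : seq lbt) : uniq s -> (forall t : lbt, (t \in s) = incr_tree n t) ->
  r.+1 * \sum_(t <- s) compacted_size t <=
  r.+1 * (2 ^ ((r.*2.+1).*2) * size s) + 2 * (n * size s).
Proof.
move=> us hs.
set Q := map labels s.
have memQ : forall w, (w \in Q) = perm_eq w (iota 1 n).
  move=> w; apply/mapP/idP => [[t ht ->]|hw].
    by move: ht; rewrite hs => /andP [].
  have uw : uniq w by rewrite (perm_uniq hw) iota_uniq.
  have [l1 i1] := cart_ok (size w) w (leqnn _) uw.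
  exists (cart (size w) w) => //.
  by rewrite hs /incr_tree l1 hw i1.
have uQ : uniq Q.
  rewrite map_inj_in_uniq // => t1 t2; rewrite !hs => /andP [p1 i1] /andP [p2 i2] e.
  apply: labels_inj => //; by rewrite (perm_uniq p1) iota_uniq.
have szQ : forall w, w \in Q -> size w = n.
  by move=> w; rewrite memQ => /perm_size ->; rewrite size_iota.
have swQ : forall w a b, w \in Q -> a < n -> b < n -> swap a b w \in Q.
  move=> w a b hw ha hb; rewrite memQ; apply: perm_trans (perm_swap _ _ _ _ _) _;
  rewrite ?szQ //; by rewrite -memQ.
have hL := sum_L Q n r uQ szQ swQ.
have hrev : \sum_(w <- Q) L r (rev w) = \sum_(w <- Q) L r w.
  apply: sum_invol => // [w|w _]; last by rewrite revK.
  by rewrite !memQ perm_rev.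
have hb : \sum_(t <- s) compacted_size t <=
   \sum_(t <- s) (2 ^ ((r.*2.+1).*2) + (L r (labels t) + L r (rev (labels t)))).
  rewrite big_seq [X in _ <= X]big_seq; apply: leq_sum => t ht.
  apply: leq_trans (compacted_le (r.*2.+1) t) _; rewrite leq_add2l; apply: G_le.
  by move: ht; rewrite hs => /andP [].
set B := 2 ^ _ in hb *.
clearbody B.
rewrite big_split big_split big_const_seq count_predT iter_addn_0 in hb.
rewrite -(big_map labels xpredT (L r)) -/Q in hb.
rewrite -(big_map labels xpredT (fun w => L r (rev w))) -/Q hrev in hb.
have sQ : size Q = size s by rewrite size_map.
rewrite sQ in hL.
move: hb hL; set X := \sum_(w <- Q) L r w; set Y := \sum_(t <- s) _.
move=> hb hL.
have := leq_mul (leqnn r.+1) hb; rewrite !mulnDr.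
move: hL; clearbody X Y; nia.
Qed.

Lemma pow_ge j : j.*2.+2 <= 2 ^ j.+1.
Proof. elim: j => [|j IH] //; rewrite expnS; have := expn_gt0 2 j.+1; lia. Qed.

Lemma arith n : 2 <= n -> exists k, [/\ n < 2 ^ k.+1, 0 < k &
  forall SX S, (k %/ 8).+1 * SX <= (k %/ 8).+1 * (2 ^ (((k %/ 8).*2.+1).*2) * S) + 2 * (n * S) ->
  k.+1 * SX <= 24 * n * S].
Proof.
move=> hn; set k := trunc_log 2 n.
have h2k : 2 ^ k <= n by apply: trunc_logP; lia.
have hlt : n < 2 ^ k.+1 by apply: trunc_log_ltn.
exists k; split => //.
  rewrite /k trunc_log_gt0; lia.
move=> SX S H.
set r := k %/ 8 in H *.
set B := 2 ^ _ in H.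
set j := k %/ 2.
have h4r : 4 * r <= j by rewrite /r /j; lia.
have h2j : j.*2 <= k by rewrite /j; lia.
have hk1 : k.+1 <= 2 ^ j.+1 by apply: leq_trans (pow_ge j); rewrite /j; lia.
have H3 : k.+1 * B <= 8 * n.
  apply: leq_trans (_ : 2 ^ j.+1 * 2 ^ (4 * r + 2) <= _).
    have eB : B = 2 ^ (4 * r + 2) by rewrite /B; congr (2 ^ _); lia.
    by rewrite eB; apply: leq_mul hk1 (leqnn _).
  rewrite -expnD; apply: leq_trans (_ : 2 ^ (k + 3) <= _).
    by rewrite leq_pexp2l //; lia.
  by rewrite expnD mulnC leq_mul2l h2k.
have H4 : k.+1 <= 8 * r.+1 by rewrite /r; lia.
have H5 := leq_mul H3 (leqnn (r.+1 * S)).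
have H6 := leq_mul H4 (leqnn (2 * n * S)).
have H7 := leq_mul (leqnn k.+1) H.
rewrite -(leq_pmul2l (ltn0Sn r)).
move: H5 H6 H7; clearbody B r j; clear; nia.
Qed.


Lemma expn_pow m k : m ^ k = Nat.pow m k.
Proof. elim: k => [|k IH] //; rewrite expnS IH. by []. Qed.

Local Open Scope R_scope.

Theorem theorem3p9 :
  exists (C : R) (N : nat),
    forall (n : nat), (N <= n)%N ->
    forall (s : seq lbt), uniq s -> (forall t : lbt, (t \in s) = incr_tree n t) ->
      Rle (uniform_mean s compacted_size) (Rmult C (Rdiv (INR n) (ln (INR n)))).
Proof.
exists 24, 2%N => n hn s us hs.
have [k [hlt hk0 Hk]] := arith n hn.
have H := Hk _ _ (main_nat n (k %/ 8) s us hs).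
rewrite /uniform_mean.
move: H; set SX := \sum_(t <- s) compacted_size t; set S := size s => H.
have H' : INR k.+1 * INR SX <= 24 * INR n * INR S.
  have -> : 24 = INR 24 by rewrite /INR; lra.
  rewrite -!mult_INR; apply: le_INR; apply/leP; exact: H.
have n1 : (1 < INR n) by apply: (lt_INR 1); apply/ltP.
have lnp : (0 < ln (INR n)) by rewrite -ln_1; apply: ln_increasing; lra.
have ln2 : (ln 2 < 1).
  rewrite -[X in _ < X](ln_exp 1); apply: ln_increasing; first lra.
  have := exp_ineq1 1 ltac:(lra); lra.
have ln2p : (0 < ln 2) by rewrite -ln_1; apply: ln_increasing; lra.
have lnk : (ln (INR n) <= INR k.+1).
  have h : (INR n < 2 ^ k.+1).
    have -> : (2 ^ k.+1) = INR (2 ^ k.+1)%N by rewrite expn_pow pow_INR.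
    by apply: lt_INR; apply/ltP.
  have := ln_increasing (INR n) _ ltac:(lra) h; rewrite ln_pow; last lra.
  have := pos_INR k.+1; nra.
have nn : (0 <= INR n) by apply: pos_INR.
have sx : (0 <= INR SX) by apply: pos_INR.
case: (posnP S) => [S0|Sp].
  rewrite S0 /= /Rdiv Rinv_0 Rmult_0_r.
  apply: Rmult_le_pos; first lra.
  apply: Rmult_le_pos => //; apply: Rlt_le; apply: Rinv_0_lt_compat; lra.
have Sr : (0 < INR S) by apply: (lt_INR 0); apply/ltP.
have key : (INR SX * ln (INR n) <= 24 * INR n * INR S) by nra.
apply: (Rmult_le_reg_r (INR S * ln (INR n))); first nra.
have -> : (INR SX / INR S * (INR S * ln (INR n)) = INR SX * ln (INR n)) by field; lra.
have -> : (24 * (INR n / ln (INR n)) * (INR S * ln (INR n)) = 24 * INR n * INR S) by field; lra.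
exact: key.
Qed.
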